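(* Let $\gamma,\delta$ be positive integers, let $\varphi_{\gamma,\delta}(z)=(1+z)^{\gamma}(1+z^{-1})^{\delta}$, let $\mu$ be a partition of length $M=l(\mu)$, and let $N\ge M$. Then $$D_N^{\varnothing,\mu}(\varphi_{\gamma,\delta})=D_N(\varphi_{\gamma,\delta})\,\frac{G(N-M+1)}{G(N+1)}\,\frac{G(\delta+N+1)}{G(\delta+N-M+1)}\,s_{\mu'}(1^{\gamma})\prod_{k=1}^{M}\frac{(\mu_k+N-k)!}{(\delta+\mu_k+N-k)!}.$$
   Context: For a Laurent polynomial $f(z)=\sum_kd_kz^k$, $D_N(f)=\det(d_{j-k})_{j,k=1}^N$ and $D_N^{\varnothing,\mu}(f)=\det(d_{j-k+\mu_k})_{j,k=1}^N$, with $\mu_k=0$ for $k>l(\mu)$. Here $d_k=\binom{\gamma+\delta}{\delta+k}$ for $-\delta\le k\le\gamma$ and $0$ otherwise. $\mu'$ is the conjugate partition, and $s_{\mu'}(1^\gamma)$ is the Schur polynomial evaluated at $\gamma$ variables equal to $1$. $G$ is the Barnes $G$-function ($G(1)=1$, $G(z+1)=\Gamma(z)G(z)$). *)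

(* Defs.v *)
From mathcomp Require Import all_boot all_order all_algebra.
Set Implicit Arguments. Unset Strict Implicit. Unset Printing Implicit Defensive.
Import Order.TTheory GRing.Theory Num.Theory.
Local Open Scope ring_scope.

Definition is_partition (mu : seq nat) : bool :=
  sorted geq mu && all (fun p => 0 < p)%N mu.

Definition conj_part (mu : seq nat) : seq nat :=
  [seq count (fun p => j < p)%N mu | j <- iota 0 (head 0%N mu)].

(* Semistandard Young tableaux of shape lam with entries in {1..n}:
   encoded as T : 'I_(l(lam)) * 'I_(lam_1) -> option 'I_n, value None meaning
   "cell (i,j) is not in the Young diagram", value Some e the entry e+1. *)
Definition in_shape (lam : seq nat) (i j : nat) : bool := (j < nth 0 lam i)%N.

Definition cells (lam : seq nat) := ('I_(size lam) * 'I_(head 0%N lam))%type.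

Definition entry (n : nat) (o : option 'I_n) : nat :=
  if o is Some e then (e : nat) else 0%N.

Definition is_ssyt (n : nat) (lam : seq nat)
  (T : {ffun cells lam -> option 'I_n}) : bool :=
  [forall c : cells lam, (T c != None) == in_shape lam c.1 c.2] &&
  [forall c : cells lam, forall c' : cells lam,
     (in_shape lam c.1 c.2 && in_shape lam c'.1 c'.2) ==>
     ((((c.1 : nat) == c'.1) && (c'.2 == (c.2).+1 :> nat)) ==>
        (entry (T c) <= entry (T c'))%N) &&
     ((((c.2 : nat) == c'.2) && (c'.1 == (c.1).+1 :> nat)) ==>
        (entry (T c) < entry (T c'))%N)].

Definition schur (R : comPzRingType) (n : nat) (lam : seq nat) (x : 'I_n -> R) : R :=
  \sum_(T : {ffun cells lam -> option 'I_n} | is_ssyt T)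
    \prod_(c : cells lam) (if T c is Some e then x e else 1).

(* Barnes G-function at positive integers: G(1)=1, G(n+1) = Gamma(n) G(n) = (n-1)! G(n),
   i.e. G(n) = prod_{i=0}^{n-2} i!. (Only used at positive integer arguments.) *)
Definition barnesG (n : nat) : nat := \prod_(i < n.-1) i`!.

(* Fourier coefficients d_k of phi_{gamma,delta}(z) = (1+z)^gamma (1+1/z)^delta. *)
Definition phi_coef (gamma delta : nat) (k : int) : rat :=
  if ((- (delta%:Z) <= k) && (k <= gamma%:Z)) then ('C(gamma + delta, absz (delta%:Z + k)))%:R
  else 0.

Definition toeplitzD (N : nat) (d : int -> rat) : rat :=
  \det (\matrix_(j < N, k < N) d (j%:Z - k%:Z)).

(* D_N^{empty,mu}(f) = det(d_{j-k+mu_k})_{j,k=1}^N, mu_k = 0 for k > l(mu).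
   With 0-based indices j,k, mu_{k+1} = nth 0 mu k. *)
Definition toeplitzD_mu (N : nat) (mu : seq nat) (d : int -> rat) : rat :=
  \det (\matrix_(j < N, k < N) d (j%:Z - k%:Z + (nth 0%N mu k)%:Z)).

(* Main.v *)
Require Import Defs.
From mathcomp Require Import all_boot all_order all_algebra.
From mathcomp Require Import zify perm ring lra.
Import Order.TTheory GRing.Theory Num.Theory.

Set Implicit Arguments. Unset Strict Implicit. Unset Printing Implicit Defensive.


Section K.
Variables (R C : nat).

Definition ssytg n (sh : 'I_R -> 'I_C -> bool) (T : {ffun 'I_R * 'I_C -> option 'I_n}) : bool :=
  [forall c, (T c != None) == sh c.1 c.2] &&
  [forall c, forall c',
     (sh c.1 c.2 && sh c'.1 c'.2) ==>
     ((((c.1 : nat) == c'.1) && (c'.2 == (c.2).+1 :> nat)) ==>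
        (entry (T c) <= entry (T c'))%N) &&
     ((((c.2 : nat) == c'.2) && (c'.1 == (c.1).+1 :> nat)) ==>
        (entry (T c) < entry (T c'))%N)].

Lemma ssytgP n sh (T : {ffun 'I_R * 'I_C -> option 'I_n}) :
  reflect [/\ forall x, (T x != None) = sh x.1 x.2,
     (forall x y, sh x.1 x.2 -> sh y.1 y.2 -> x.1 = y.1 :> nat -> y.2 = (x.2).+1 :> nat -> entry (T x) <= entry (T y)) &
     (forall x y, sh x.1 x.2 -> sh y.1 y.2 -> x.2 = y.2 :> nat -> y.1 = (x.1).+1 :> nat -> entry (T x) < entry (T y))]
   (ssytg sh T).
Proof.
apply: (iffP andP) => [[/forallP H1 /forallP H2]|[H1 H2 H3]]; split.
- move=> x; move: (H1 x) => /= /eqP; done.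
- move=> x y hx hy e1 e2; have /forallP/(_ y) := H2 x.
  by rewrite hx hy e1 e2 !eqxx /= => /andP[].
- move=> x y hx hy e1 e2; have /forallP/(_ y) := H2 x.
  by rewrite hx hy e1 e2 !eqxx /= => /andP[].
- by apply/forallP => x; rewrite H1.
- apply/forallP => x; apply/forallP => y; apply/implyP => /andP[hx hy].
  apply/andP; split; apply/implyP => /andP[/eqP e1 /eqP e2].
  + exact: H2.
  + exact: H3.
Qed.

End K.

Section K2.
Variables (R C : nat).
Implicit Types (f : 'I_C -> nat).

Definition shp f := fun (i : 'I_R) (j : 'I_C) => (i < f j)%N.
Definition Sset n f := [set T : {ffun 'I_R * 'I_C -> option 'I_n} | ssytg (shp f) T].
Definition decr f := [forall k : 'I_C, forall k' : 'I_C, (k' == k.+1 :> nat) ==> (f k' <= f k)%N].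
Lemma decrP f : reflect (forall k k' : 'I_C, k' = k.+1 :> nat -> (f k' <= f k)%N) (decr f).
Proof.
apply: (iffP forallP) => [H k k' e|H k]; last by apply/forallP => k'; apply/implyP => /eqP; apply: H.
by move/forallP: (H k) => /(_ k') /implyP; apply; apply/eqP.
Qed.
Definition tv n (T : {ffun 'I_R * 'I_C -> option 'I_n.+1}) : {ffun 'I_C -> bool} :=
  [ffun j => [exists i, T (i, j) == Some ord_max]].
Definition fsub f (t : {ffun 'I_C -> bool}) := fun j => (f j - t j)%N.
Definition validK f (t : {ffun 'I_C -> bool}) := [forall k, t k ==> (0 < f k)%N] && decr (fsub f t).
Definition gmap n (T : {ffun 'I_R * 'I_C -> option 'I_n.+1}) : {ffun 'I_R * 'I_C -> option 'I_n} :=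
  [ffun x => obind (unlift ord_max) (T x)].
Definition hmap n f (T : {ffun 'I_R * 'I_C -> option 'I_n}) : {ffun 'I_R * 'I_C -> option 'I_n.+1} :=
  [ffun x => if T x is Some e then Some (lift ord_max e) else if (x.1 < f x.2)%N then Some ord_max else None].

Lemma some_lift_neq n (j : 'I_n) : (Some (lift ord_max j) == Some (@ord_max n)) = false.
Proof. apply/negP => /eqP [] /eqP; rewrite /bump leqNgt ltn_ord /= => /eqP h; have := ltn_ord j; lia. Qed.

Lemma entry_le n (o : option 'I_n.+1) : (entry o <= n)%N.
Proof. by case: o => [e|] //=; rewrite -ltnS. Qed.

Lemma entry_max n (o : option 'I_n.+1) : o != None -> entry o = n -> o = Some ord_max.
Proof. by case: o => [e|] //= _ he; congr Some; apply: val_inj. Qed.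

Variable n : nat.
Variable f : 'I_C -> nat.
Hypothesis fR : forall j, (f j <= R)%N.
Hypothesis fdec : decr f.

Lemma KL1 (T : {ffun 'I_R * 'I_C -> option 'I_n.+1}) x :
  ssytg (shp f) T -> T x = Some ord_max -> (x.1).+1 = f x.2.
Proof.
case/ssytgP => Hs Hr Hc Tx.
have sx : shp f x.1 x.2 by rewrite -Hs Tx.
move: (sx); rewrite /shp => lt1.
case: (ltngtP (x.1).+1 (f x.2)) => [lt2|gt|//]; last by exfalso; lia.
have lty : ((x.1).+1 < R)%N by apply: leq_trans lt2 (fR _).
pose y := (Ordinal lty, x.2).
have := Hc x y sx lt2 erefl erefl.
by rewrite Tx /=; move: (entry_le (T y)); rewrite ltnNge => ->.
Qed.

Lemma KL (T : {ffun 'I_R * 'I_C -> option 'I_n.+1}) x :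
  ssytg (shp f) T -> shp f x.1 x.2 -> (T x == Some ord_max) = (tv T x.2 && ((x.1).+1 == f x.2)).
Proof.
move=> HT sx; apply/eqP/andP => [Tx|[]].
  split; last by apply/eqP; apply: KL1 Tx.
  by rewrite ffunE; apply/existsP; exists x.1; rewrite -surjective_pairing Tx.
rewrite ffunE => /existsP[i /eqP Ti] /eqP e.
have := KL1 HT Ti => /= e2.
have ex : x.1 = i by apply: val_inj => /=; lia.
rewrite [x]surjective_pairing ex.
exact: Ti.
Qed.


Lemma gmapE (T : {ffun 'I_R * 'I_C -> option 'I_n.+1}) x :
  gmap T x = (if T x is Some e then unlift ord_max e else None).
Proof. by rewrite ffunE; case: (T x). Qed.

Lemma gmap_entry (T : {ffun 'I_R * 'I_C -> option 'I_n.+1}) x :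
  T x != Some ord_max -> entry (gmap T x) = entry (T x).
Proof.
rewrite gmapE; case: (T x) => [e|] //= ne; case: unliftP => [j ->|] /=.
  by rewrite /= /bump leqNgt ltn_ord.
by move=> h; rewrite h eqxx in ne.
Qed.

Lemma gmap_none (T : {ffun 'I_R * 'I_C -> option 'I_n.+1}) x :
  (gmap T x != None) = (T x != None) && (T x != Some ord_max).
Proof.
rewrite gmapE; case: (T x) => [e|] //=; case: unliftP => [j ->|->] /=.
  by rewrite some_lift_neq.
by rewrite eqxx.
Qed.

Lemma tv_valid (T : {ffun 'I_R * 'I_C -> option 'I_n.+1}) :
  ssytg (shp f) T -> validK f (tv T).
Proof.
move=> HT; move: (HT) => /ssytgP [Hs Hr Hc].
apply/andP; split.
  apply/forallP => k; apply/implyP; rewrite ffunE => /existsP [i /eqP Ti].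
  have : shp f i k by rewrite -(Hs (i, k)) Ti.
  by rewrite /shp; lia.
apply/decrP => k k' e; rewrite /fsub.
move/decrP: fdec => /(_ k k' e) fle.
case: (ltngtP (f k') (f k)) => [lt|gt|eqf]; first by case: (tv T k'); case: (tv T k); lia.
  by exfalso; lia.
case tk: (tv T k); last by case: (tv T k'); lia.
suff -> : tv T k' = true by lia.
move: tk; rewrite !ffunE => /existsP [i /eqP Ti].
have e1 := KL1 HT Ti; rewrite /= in e1.
apply/existsP; exists i.
have sy : shp f (i, k').1 (i, k').2 by rewrite /shp /= eqf -e1.
have sx : shp f (i, k).1 (i, k).2 by rewrite /shp /= -e1.
have := Hr (i, k) (i, k') sx sy erefl e.
rewrite Ti /= => le.
apply/eqP; apply: entry_max; first by rewrite Hs.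
by apply/eqP; rewrite eqn_leq entry_le.
Qed.

Lemma gmap_in (T : {ffun 'I_R * 'I_C -> option 'I_n.+1}) :
  ssytg (shp f) T -> ssytg (shp (fsub f (tv T))) (gmap T).
Proof.
move=> HT; move: (HT) => /ssytgP [Hs Hr Hc].
have Hs' : forall x, (gmap T x != None) = shp (fsub f (tv T)) x.1 x.2.
  move=> x; rewrite gmap_none Hs /shp /fsub.
  case sx: (x.1 < f x.2)%N => /=; last by apply/esym/negbTE; lia.
  have := KL HT sx => ->.
  by case: (tv T x.2) => /=; lia.
have sub : forall x, shp (fsub f (tv T)) x.1 x.2 -> shp f x.1 x.2 /\ T x != Some ord_max.
  move=> x; rewrite -Hs' gmap_none => /andP [a b]; split => //; by rewrite -Hs.
apply/ssytgP; split => //.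
  move=> x y /sub [sx nx] /sub [sy ny] e1 e2; rewrite !gmap_entry //; exact: Hr.
move=> x y /sub [sx nx] /sub [sy ny] e1 e2; rewrite !gmap_entry //; exact: Hc.
Qed.

Lemma hmapE (T : {ffun 'I_R * 'I_C -> option 'I_n}) x :
  hmap f T x = (if T x is Some e then Some (lift ord_max e) else if (x.1 < f x.2)%N then Some ord_max else None).
Proof. by rewrite ffunE. Qed.

Lemma gK (T : {ffun 'I_R * 'I_C -> option 'I_n}) : gmap (hmap f T) = T.
Proof.
apply/ffunP => x; rewrite gmapE hmapE; case: (T x) => [e|].
  by rewrite liftK.
by case: ifP => // _; rewrite unlift_none.
Qed.

Lemma hgK (T : {ffun 'I_R * 'I_C -> option 'I_n.+1}) : ssytg (shp f) T -> hmap f (gmap T) = T.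
Proof.
move=> /ssytgP [Hs _ _]; apply/ffunP => x; rewrite hmapE gmapE.
case Tx: (T x) => [e|].
  case: unliftP => [j ->|->] //.
  by have := Hs x; rewrite Tx /= /shp => <-.
by have := Hs x; rewrite Tx /= /shp => <-.
Qed.

Lemma hmap_in t (T : {ffun 'I_R * 'I_C -> option 'I_n}) :
  validK f t -> ssytg (shp (fsub f t)) T -> ssytg (shp f) (hmap f T) /\ tv (hmap f T) = t.
Proof.
move=> /andP [/forallP vt /decrP dt] /ssytgP [Hs Hr Hc].
have ent : forall x, entry (hmap f T x) = if T x is Some e then (e : nat) else if (x.1 < f x.2)%N then n else 0%N.
  by move=> x; rewrite hmapE; case: (T x) => [e|] //=; [rewrite /bump leqNgt ltn_ord | case: ifP].
have sub : forall x, shp (fsub f t) x.1 x.2 -> shp f x.1 x.2 by move=> x; rewrite /shp /fsub; lia.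
split.
  apply/ssytgP; split.
  - move=> x; rewrite hmapE; have := Hs x; case: (T x) => [e|] /=.
      by move/esym/sub => ->.
    by case: ifP.
  - move=> x y sx sy e1 e2; have sx1 : (x.1 < f x.2)%N := sx; have sy1 : (y.1 < f y.2)%N := sy.
    rewrite !ent sx1 sy1.
    case Ty: (T y) => [e'|]; last by case: (T x) => [e|] //; apply: ltnW.
    have sy' : shp (fsub f t) y.1 y.2 by rewrite -Hs Ty.
    have sx' : shp (fsub f t) x.1 x.2.
      move: sy'; rewrite /shp e1 => h; apply: leq_trans h _; exact: dt.
    have := Hr x y sx' sy' e1 e2; rewrite Ty.
    by move: (sx'); rewrite -Hs; case: (T x).
  - move=> x y sx sy e1 e2; have sx1 : (x.1 < f x.2)%N := sx; have sy1 : (y.1 < f y.2)%N := sy.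
    rewrite !ent sx1 sy1.
    case Ty: (T y) => [e'|].
      have sy' : shp (fsub f t) y.1 y.2 by rewrite -Hs Ty.
      have sx' : shp (fsub f t) x.1 x.2 by move: sy'; rewrite /shp /fsub -(val_inj e1) e2; lia.
      have := Hc x y sx' sy' e1 e2; rewrite Ty.
      by move: (sx'); rewrite -Hs; case: (T x).
    have ny : ~~ shp (fsub f t) y.1 y.2 by rewrite -Hs Ty.
    have sx' : shp (fsub f t) x.1 x.2.
      move: ny sy; rewrite /shp /fsub -(val_inj e1) e2; case: (t x.2); lia.
    by move: sx'; rewrite -Hs; case: (T x).
apply/ffunP => j; rewrite ffunE.
apply/existsP/idP => [[i]|tj].
  rewrite hmapE /=; have := Hs (i, j); rewrite /shp /fsub /=.
  case: (T (i, j)) => [e|] //=.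
    by rewrite some_lift_neq.
  by case: ifP => // lt1 h _; move: h; case: (t j); lia.
have fj : (0 < f j)%N by move: (vt j); rewrite tj.
have lti : ((f j).-1 < R)%N by have := fR j; lia.
exists (Ordinal lti); rewrite hmapE /=.
have := Hs (Ordinal lti, j); rewrite /shp /fsub /= tj.
case: (T _) => [e|] /=; first by lia.
by move=> _; rewrite ifT //; lia.
Qed.

Lemma Krec : #|Sset n.+1 f| = (\sum_(t | validK f t) #|Sset n (fsub f t)|)%N.
Proof.
rewrite -sum1_card (partition_big (@tv n) (validK f)); last first.
  by move=> T; rewrite inE; apply: tv_valid.
apply: eq_bigr => t vt.
rewrite sum1_card.
have hinj : injective (@hmap n f) by apply: can_inj gK.
rewrite -(card_imset _ hinj); apply: eq_card => T.
rewrite unfold_in /= inE; apply/idP/idP.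
  case/andP => HT /eqP tT; apply/imsetP; exists (gmap T); last by rewrite hgK.
  by rewrite inE -tT; apply: gmap_in.
case/imsetP => T' ; rewrite inE => HT' ->.
by have [-> ->] := hmap_in vt HT'; rewrite eqxx.
Qed.

End K2.

Local Open Scope ring_scope.

Definition Bn (n U s : nat) : nat := if (s <= U)%N then 'C(n, U - s) else 0%N.
Definition Bm n N (u : 'I_N -> nat) : 'M[rat]_N := \matrix_(j, k) (Bn n (u k) (N.-1 - j))%:R.

Lemma Bn_pascal n U s : Bn n.+1 U s = (Bn n U s + (if U is U'.+1 then Bn n U' s else 0))%N.
Proof.
rewrite /Bn; case: U => [|U'].
  by case: s => [|s] //=; rewrite !bin0.
case: (leqP s U') => [le|gt].
  by rewrite (leq_trans le (leqnSn _)) subSn // binS.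
case: (eqVneq s U'.+1) => [->|ne].
  by rewrite leqnn subnn !bin0.
by rewrite !ifF //; apply/negbTE; rewrite -ltnNge //; lia.
Qed.

Lemma det_sum_rows M (B0 B1 : 'M[rat]_M) :
  \det (B0 + B1) = \sum_(t : {ffun 'I_M -> bool}) \det (\matrix_(i, j) (if t i then B1 i j else B0 i j)).
Proof.
rewrite /determinant.
transitivity (\sum_(s : 'S_M) \sum_(t : {ffun 'I_M -> bool})
   ((-1) ^+ s * \prod_i (if t i then B1 i (s i) else B0 i (s i)))).
  apply: eq_bigr => s _; rewrite -mulr_sumr; congr (_ * _).
  rewrite (eq_bigr (fun i => \sum_(b : bool) (if b then B1 i (s i) else B0 i (s i)))); last first.
    by move=> i _; rewrite mxE big_bool /= addrC.
  by rewrite bigA_distr_bigA.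
rewrite exchange_big; apply: eq_bigr => t _; apply: eq_bigr => s _; congr (_ * _).
by apply: eq_bigr => i _; rewrite mxE.
Qed.

Lemma det_sum_cols M (A0 A1 : 'M[rat]_M) :
  \det (A0 + A1) = \sum_(t : {ffun 'I_M -> bool}) \det (\matrix_(j, k) (if t k then A1 j k else A0 j k)).
Proof.
rewrite -det_tr (_ : (A0 + A1)^T = A0^T + A1^T); last by apply/matrixP => i j; rewrite !mxE.
rewrite det_sum_rows; apply: eq_bigr => t _; rewrite -det_tr; congr (\det _).
by apply/matrixP => i j; rewrite !mxE.
Qed.

Lemma det_zero_col M (A : 'M[rat]_M) k : (forall j, A j k = 0) -> \det A = 0.
Proof. by move=> h; rewrite (expand_det_col A k) big1 // => i _; rewrite h mul0r. Qed.

Lemma det_eq_cols M (A : 'M[rat]_M) k k' : k != k' -> (forall j, A j k = A j k') -> \det A = 0.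
Proof.
move=> nk h; rewrite -det_tr; apply: (determinant_alternate nk) => j.
by rewrite !mxE.
Qed.

Definition sdecr M (g : 'I_M -> nat) := [forall k : 'I_M, forall k' : 'I_M, (k' == k.+1 :> nat) ==> (g k' < g k)%N].
Lemma sdecrP M (g : 'I_M -> nat) : reflect (forall k k' : 'I_M, k' = k.+1 :> nat -> (g k' < g k)%N) (sdecr g).
Proof.
apply: (iffP forallP) => [H k k' e|H k]; last by apply/forallP => k'; apply/implyP => /eqP; apply: H.
by move/forallP: (H k) => /(_ k') /implyP; apply; apply/eqP.
Qed.

Lemma chain M (g : 'I_M -> nat) : sdecr g -> forall d (k k' : 'I_M), (k' = k + d :> nat)%N -> (g k' + d <= g k)%N.
Proof.
move/sdecrP => H; elim => [|d IH] k k' e.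
  have -> : k' = k by apply: val_inj => /=; lia.
  by rewrite addn0.
have lt : (k + d < M)%N by have := ltn_ord k'; lia.
have := IH k (Ordinal lt) erefl.
have : (g k' < g (Ordinal lt))%N by apply: H => /=; lia.
lia.
Qed.

Lemma chain0 M (g : 'I_M -> nat) : sdecr g -> forall k : 'I_M, (M.-1 - k <= g k)%N.
Proof.
move=> H k; have lt : (M.-1 < M)%N by have := ltn_ord k; lia.
have : (g (Ordinal lt) + (M.-1 - k) <= g k)%N by apply: chain => //=; have := ltn_ord k; lia.
lia.
Qed.

Definition validU M (U : 'I_M -> nat) (t : {ffun 'I_M -> bool}) :=
  [forall k, t k ==> (0 < U k)%N] && sdecr (fun k => U k - t k)%N.

Lemma Bm_rec n M (U : 'I_M -> nat) : sdecr U ->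
  \det (Bm n.+1 U) = \sum_(t | validU U t) \det (Bm n (fun k => U k - t k)%N).
Proof.
move=> sU.
have -> : Bm n.+1 U = Bm n U + \matrix_(j, k) (if U k is U'.+1 then Bn n U' (M.-1 - j) else 0%N)%:R.
  by apply/matrixP => j k; rewrite !mxE Bn_pascal natrD; case: (U k).
rewrite det_sum_cols (bigID (validU U)) /= [X in _ + X]big1 ?addr0.
  apply: eq_bigr => t /andP [/forallP vt _]; congr (\det _); apply/matrixP => j k; rewrite !mxE.
  move: (vt k); case: (t k) => /=; last by rewrite subn0.
  by case: (U k) => // U' _; rewrite subn1.
move=> t nv.
case: (boolP [exists k, t k && (U k == 0%N)]) => [/existsP [k /andP [tk /eqP Uk]]|nz].
  by apply: (det_zero_col (k := k)) => j; rewrite !mxE tk Uk.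
have nz' : forall k, t k -> (0 < U k)%N.
  move=> k tk; rewrite lt0n; apply/negP => /eqP Uk; move/existsP: nz; apply; exists k; by rewrite tk Uk.
have : ~~ sdecr (fun k => U k - t k)%N.
  apply: contra nv => sd; rewrite /validU sd andbT; apply/forallP => k; apply/implyP; exact: nz'.
rewrite negb_forall => /existsP [k]; rewrite negb_forall => /existsP [k'].
rewrite negb_imply => /andP [/eqP e]; rewrite -leqNgt => le.
have lt := (sdecrP _ sU) k k' e.
have kk : k != k' by apply/eqP => kk; rewrite kk in e; lia.
have nk' := nz' k'.
apply: (det_eq_cols kk) => j; rewrite !mxE.
move: le nk'; case: (t k); case: (t k'); move: lt; case: (U k) => [|u] //=; try lia.
by move=> lt le; rewrite (_ : U k' = u) //; lia.
Qed.


Definition partsU M (U : 'I_M -> nat) := fun k : 'I_M => (U k - (M.-1 - k))%N.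

Lemma Sset_eq R C n (f g : 'I_C -> nat) : (forall k, f k = g k) -> Sset R n f = Sset R n g.
Proof.
move=> e; apply/setP => T; rewrite !inE.
apply/ssytgP/ssytgP => -[H1 H2 H3]; split.
- by move=> x; rewrite H1 /shp e.
- by move=> x y; rewrite /shp -!e; apply: H2.
- by move=> x y; rewrite /shp -!e; apply: H3.
- by move=> x; rewrite H1 /shp e.
- by move=> x y; rewrite /shp !e; apply: H2.
- by move=> x y; rewrite /shp !e; apply: H3.
Qed.

Lemma valid_eq M (U : 'I_M -> nat) t : sdecr U -> validU U t = validK (partsU U) t.
Proof.
move=> sU; have cU := chain0 sU.
apply/idP/idP.
  case/andP => /forallP vt sd; have c1 := chain0 sd.
  apply/andP; split.
    apply/forallP => k; apply/implyP => tk; move: (c1 k) (vt k); rewrite tk /partsU /=.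
    have := ltn_ord k; lia.
  apply/decrP => k k' e; rewrite /fsub /partsU.
  have := (sdecrP _ sd) k k' e; have := c1 k; have := c1 k'; have := ltn_ord k'.
  case: (t k); case: (t k') => /=; lia.
case/andP => /forallP vt /decrP dk; apply/andP; split.
  apply/forallP => k; apply/implyP => tk; move: (vt k); rewrite tk /partsU /=; lia.
apply/sdecrP => k k' e.
move: (vt k) (vt k') (dk k k' e); rewrite /fsub /partsU.
have := cU k; have := cU k'; have := ltn_ord k'.
case: (t k); case: (t k') => /=; lia.
Qed.

Lemma decr_parts M (U : 'I_M -> nat) : sdecr U -> decr (partsU U).
Proof.
move=> sU; have cU := chain0 sU; apply/decrP => k k' e; rewrite /partsU.
have := (sdecrP _ sU) k k' e; have := cU k; have := cU k'; have := ltn_ord k'; lia.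
Qed.

Lemma JK n M R (U : 'I_M -> nat) : sdecr U -> (forall k, (partsU U k <= R)%N) ->
  \det (Bm n U) = (#|Sset R n (partsU U)|)%:R.
Proof.
elim: n M R U => [|n IH] M R U sU bR.
  have cU := chain0 sU.
  case: (boolP [forall k, partsU U k == 0%N]) => [/forallP z | nz].
    have -> : Bm 0 U = 1%:M.
      apply/matrixP => j k; rewrite !mxE /Bn bin0n.
      have := z k; rewrite /partsU => /eqP z'.
      have := cU k; have := ltn_ord k; have := ltn_ord j.
      case: (eqVneq j k) => [->|ne] /=.
        by move=> _ _ h; rewrite h z' eqxx.
      move=> hj hk hc; case: ifP => // le.
      suff -> : (U k - (M.-1 - j) == 0)%N = false by [].
      by apply/negbTE/eqP => h; move/eqP: ne; apply; apply: val_inj => /=; lia.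
    rewrite det1.
    have -> : Sset R 0 (partsU U) = setT.
      apply/setP => T; rewrite !inE; apply/ssytgP; split.
      - by move=> x; case: (T x) => [[e he]|] //; rewrite /shp (eqP (z x.2)).
      - by move=> x y; rewrite /shp (eqP (z x.2)).
      - by move=> x y; rewrite /shp (eqP (z x.2)).
    by rewrite cardsT card_ffun card_option card_ord exp1n.
  move: nz; rewrite negb_forall => /existsP [k nk].
  have M0 : (0 < M)%N by have := ltn_ord k; lia.
  have R0 : (0 < R)%N by have := bR k; lia.
  have -> : #|Sset R 0 (partsU U)| = 0%N.
    apply/eqP; rewrite cards_eq0; apply/eqP/setP => T; rewrite !inE.
    apply/negP => /ssytgP [Hs _ _]; have := Hs (Ordinal R0, k).
    by rewrite /shp /=; case: (T _) => [[e he]|] //= ; rewrite lt0n nk.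
  pose k0 : 'I_M := Ordinal M0.
  apply: (det_zero_col (k := k0)) => j; rewrite !mxE /Bn.
  have := chain sU (k := k0) (k' := k) (d := k) erefl.
  have := cU k; have := ltn_ord j; move: nk; rewrite /partsU /=.
  case: ifP => // _ *; rewrite bin0n; case: eqP => //; lia.
rewrite Bm_rec //.
under eq_bigr => t vt.
  rewrite (IH M R); last first.
  - by move=> k; apply: leq_trans (bR k); rewrite /partsU; lia.
  - by case/andP: vt.
  rewrite (@Sset_eq _ _ _ _ (fsub (partsU U) t)); last by move=> k; rewrite /partsU /fsub /=; lia.
  over.
rewrite (eq_bigl _ _ (fun t => valid_eq t sU)) -natr_sum.
by rewrite (@Krec _ _ n _ bR (decr_parts sU)).
Qed.

Lemma sorted_cons_le (x : nat) s : sorted geq (x :: s) -> forall k, (nth 0 s k <= x)%N.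
Proof.
elim: s x => [|y s IH] x /= H k; first by rewrite nth_nil.
case/andP: H => xy H; case: k => [|k] //=.
by apply: leq_trans (IH _ H k) xy.
Qed.

Lemma sorted_head_le (mu : seq nat) : sorted geq mu -> forall k, (nth 0 mu k <= head 0 mu)%N.
Proof.
case: mu => [|x s] H k; first by rewrite nth_nil.
by case: k => //= k; apply: sorted_cons_le H k.
Qed.

Lemma sorted_adj (mu : seq nat) : sorted geq mu -> forall k, (nth 0 mu k.+1 <= nth 0 mu k)%N.
Proof.
move=> H k; case: (ltnP k.+1 (size mu)) => lt.
  by move/(sortedP 0): H => /(_ k lt).
by rewrite nth_default.
Qed.

Lemma cnt (mu : seq nat) i j : sorted geq mu -> (j < count (fun p => i < p) mu)%N = (i < nth 0 mu j)%N.
Proof.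
elim: mu j => [|x s IH] j H; first by rewrite nth_nil.
have Hs : sorted geq s by move: H => /= /path_sorted.
have le := sorted_cons_le H.
rewrite /=.
case: (ltnP i x) => ix.
  by case: j => [|j] //=; rewrite add1n ltnS IH.
have c0 : count (fun p => i < p)%N s = 0%N.
  apply/eqP; rewrite -leqn0 leqNgt (IH 0%N Hs) -leqNgt.
  by apply: leq_trans (le 0%N) ix.
rewrite add0n c0; case: j => [|j] /=; apply/esym/negbTE; rewrite -leqNgt //.
exact: leq_trans (le j) ix.
Qed.

Lemma ssytg_eq R C n (sh1 sh2 : 'I_R -> 'I_C -> bool) (T : {ffun 'I_R * 'I_C -> option 'I_n}) :
  (forall i j, sh1 i j = sh2 i j) -> ssytg sh1 T = ssytg sh2 T.
Proof.
move=> e; apply/ssytgP/ssytgP => -[H1 H2 H3]; split.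
- by move=> x; rewrite H1 e.
- by move=> x y; rewrite -!e; apply: H2.
- by move=> x y; rewrite -!e; apply: H3.
- by move=> x; rewrite H1 e.
- by move=> x y; rewrite !e; apply: H2.
- by move=> x y; rewrite !e; apply: H3.
Qed.

Lemma head_conj (mu : seq nat) : is_partition mu -> head 0%N (conj_part mu) = size mu.
Proof.
case: mu => [|x s] //= /andP [_ /andP [x0 /allP pos]].
rewrite /conj_part /=; case: x x0 => // x _ /=.
rewrite (@eq_in_count _ _ predT); first by rewrite count_predT.
by move=> p /pos.
Qed.

Lemma size_conj (mu : seq nat) : size (conj_part mu) = head 0%N mu.
Proof. by rewrite /conj_part size_map size_iota. Qed.

Lemma schur_det (mu : seq nat) gamma : is_partition mu ->
  schur (conj_part mu) (fun _ : 'I_gamma => 1 : rat) =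
  \det (Bm gamma (fun k : 'I_(size mu) => (nth 0 mu k + ((size mu).-1 - k))%N)).
Proof.
move=> Pm; have /andP [Sm _] := Pm.
rewrite -(head_conj Pm).
set lam := conj_part mu.
rewrite (@JK _ _ (size lam)); last first.
- by move=> k; rewrite /partsU size_conj; apply: leq_trans (sorted_head_le Sm k); lia.
- apply/sdecrP => k k' e; have := sorted_adj Sm k; rewrite e.
  have := ltn_ord k'; lia.
rewrite (@Sset_eq _ _ _ _ (fun k : 'I_(head 0%N lam) => nth 0%N mu k)); last by move=> k; rewrite /partsU; lia.
rewrite /schur.
transitivity ((\sum_(T : {ffun cells lam -> option 'I_gamma} | is_ssyt T) 1%N)%:R : rat).
  rewrite natr_sum; apply: eq_bigr => T _; rewrite big1 //.
  by move=> c _; case: (T c).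
rewrite sum1_card; congr (_%:R); apply: eq_card => T.
rewrite inE unfold_in /=.
change (ssytg (fun (i : 'I_(size lam)) (j : 'I_(head 0%N lam)) => in_shape lam i j) T = ssytg (shp (fun k : 'I_(head 0%N lam) => nth 0%N mu k)) T).
apply: ssytg_eq => i j; rewrite /in_shape /shp /lam /conj_part.
have hi : (i < head 0%N mu)%N by rewrite -size_conj; exact: ltn_ord i.
rewrite (nth_map 0%N) ?size_iota // nth_iota //.
by rewrite add0n cnt.
Qed.



Lemma ffact_prodR (m s : nat) : ((m ^_ s)%:R : rat) = \prod_(i < s) (m%:R - i%:R).
Proof.
elim: s => [|s IH]; first by rewrite big_ord0.
rewrite ffactnSr big_ord_recr /= natrM -IH.
case: (leqP s m) => h; first by rewrite natrB.
by rewrite ffact_small // !mul0r.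
Qed.

Definition Pol (n N s : nat) : {poly rat} :=
  \prod_(i < s) ('X - (i%:R)%:P) * \prod_(i < N.-1 - s) (((n + N.-1)%:R - i%:R)%:P - 'X).

Lemma size_Pol n N s : (s <= N.-1)%N -> (0 < N)%N -> (size (Pol n N s) <= N)%N.
Proof.
move=> hs hN; rewrite /Pol; apply: leq_trans (size_mul_leq _ _) _.
rewrite !size_prod; first last.
- by move=> i _; rewrite -size_poly_eq0 size_XsubC.
- by move=> i _; rewrite -size_poly_eq0 -(opprB 'X) size_polyN size_XsubC.
have e1 : (\sum_(i < s) size (('X - ((i%:R : rat))%:P)%R) = s * 2)%N.
  rewrite (eq_bigr (fun _ => 2%N)) => [|i _]; last by rewrite size_XsubC.
  by rewrite sum_nat_const card_ord.
have e2 : (\sum_(i < N.-1 - s) size (((((n + N.-1)%:R - i%:R : rat))%:P - 'X)%R) = (N.-1 - s) * 2)%N.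
  rewrite (eq_bigr (fun _ => 2%N)) => [|i _]; last by rewrite -(opprB 'X) size_polyN size_XsubC.
  by rewrite sum_nat_const card_ord.
rewrite e1 e2 !card_ord; lia.
Qed.

Lemma Pol_eval n N s (u : nat) : (u <= n + N.-1)%N ->
  (Pol n N s).[u%:R] = ((u ^_ s * (n + N.-1 - u) ^_ (N.-1 - s))%N)%:R.
Proof.
move=> hu; rewrite /Pol hornerM !horner_prod natrM !ffact_prodR; congr (_ * _).
  by apply: eq_bigr => i _; rewrite hornerXsubC.
apply: eq_bigr => i _; rewrite !hornerE natrB //.
by rewrite addrAC.
Qed.

Lemma Bn_fact n N u s : (u <= n + N.-1)%N -> (s <= N.-1)%N ->
  (Bn n u s * (u`! * (n + N.-1 - u)`!) = n`! * (u ^_ s * (n + N.-1 - u) ^_ (N.-1 - s)))%N.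
Proof.
rewrite /Bn => hu hs; case: (leqP s u) => su; last by rewrite (ffact_small su) mul0n muln0.
case: (leqP (u - s) n) => h.
  rewrite -{1}(ffact_fact su) -{1}(@ffact_fact (n + N.-1 - u) (N.-1 - s)); last by lia.
  have -> : (n + N.-1 - u - (N.-1 - s) = n - (u - s))%N by lia.
  rewrite -(bin_fact h); ring.
by rewrite bin_small // (@ffact_small _ (N.-1 - s)) ?muln0 //; lia.
Qed.

Definition Cm n N : 'M[rat]_N := \matrix_(j, m) (Pol n N (N.-1 - j))`_m.
Definition Wt n N (u : 'I_N -> nat) : rat := \prod_k (((u k)`! * (n + N.-1 - u k)`!)%N)%:R.
Definition Vd N (u : 'I_N -> nat) : rat := \prod_(i < N) \prod_(j < N | (i < j)%N) ((u j)%:R - (u i)%:R).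

Lemma CF n N (u : 'I_N -> nat) : (forall k, u k <= n + N.-1)%N ->
  \det (Bm n u) * Wt n u = (n`!)%:R ^+ N * \det (Cm n N) * Vd u.
Proof.
move=> hu.
have E : Bm n u *m diag_mx (\row_k (((u k)`! * (n + N.-1 - u k)`!)%N)%:R) =
   (n`!)%:R *: (Cm n N *m Vandermonde N (\row_k ((u k)%:R : rat))).
  apply/matrixP => j k; rewrite mul_mx_diag !mxE.
  rewrite (_ : \sum_m _ = (Pol n N (N.-1 - j)).[(u k)%:R]); last first.
    have hs : (size (Pol n N (N.-1 - j)) <= N)%N by apply: size_Pol; have := ltn_ord j; lia.
    rewrite (horner_coef_wide _ hs).
    by apply: eq_bigr => m _; rewrite !mxE.
  rewrite Pol_eval // -natrM Bn_fact //; last by lia.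
  by rewrite natrM.
move: (congr1 determinant E); rewrite det_mulmx det_diag detZ det_mulmx det_Vandermonde.
have e1 : \prod_i (\row_k (((u k)`! * (n + N.-1 - u k)`!)%N)%:R) 0 i = Wt n u :> rat.
  by apply: eq_bigr => k _; rewrite mxE.
have e2 : \prod_(i < N) \prod_(j < N | (i < j)%N) ((\row_k ((u k)%:R : rat)) 0 j - (\row_k ((u k)%:R : rat)) 0 i) = Vd u.
  by apply: eq_bigr => i _; apply: eq_bigr => j _; rewrite !mxE.
by rewrite e1 e2 mulrA.
Qed.

Lemma phi_Bn g d (m : int) (U s : nat) : d%:Z + m = U%:Z - s%:Z ->
  phi_coef g d m = (Bn (g + d) U s)%:R.
Proof.
move=> e; rewrite /phi_coef /Bn; case: (leqP s U) => h.
  have -> : (- (d%:Z) <= m) = true by apply/idP; lia.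
  have ea : absz (d%:Z + m) = (U - s)%N by rewrite e; lia.
  rewrite ea /=; case: ifP => // hm.
  by rewrite bin_small //; move/negbT: hm; rewrite -ltNge => hm; lia.
have -> : (- (d%:Z) <= m) = false by apply/negbTE; rewrite -ltNge; lia.
by [].
Qed.

Lemma toep_Bm N (mu : seq nat) g d :
  toeplitzD_mu N mu (phi_coef g d) = \det (Bm (g + d) (fun k : 'I_N => (d + nth 0%N mu k + (N.-1 - k))%N)).
Proof.
rewrite /toeplitzD_mu; congr (\det _); apply/matrixP => j k; rewrite !mxE.
apply: phi_Bn; have := ltn_ord j; have := ltn_ord k; lia.
Qed.

Lemma toep0 N (dd : int -> rat) : toeplitzD N dd = toeplitzD_mu N [::] dd.
Proof.
rewrite /toeplitzD /toeplitzD_mu; congr (\det _); apply/matrixP => j k; rewrite !mxE.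
by rewrite nth_nil addr0.
Qed.

Lemma Vd_nat N (g : nat -> nat) : Vd (fun k : 'I_N => g k) =
  \prod_(0 <= i < N) \prod_(i.+1 <= j < N) ((g j)%:R - (g i)%:R).
Proof.
rewrite /Vd big_mkord; apply: eq_bigr => i _.
rewrite -(big_mkord (fun j => (i < j)%N) (fun j => (g j)%:R - (g i)%:R)).
rewrite (@big_cat_nat _ _ _ i.+1) //=.
rewrite big_nat_cond big1 ?mul1r; last by move=> j /andP [/andP [_ h1] h2]; exfalso; lia.
rewrite big_nat_cond [RHS]big_nat_cond; apply: eq_bigl => j.
by case: (i.+1 <= j)%N (j < N)%N (i < j)%N => [] [] [] //=.
Qed.

Lemma Wt_nat n N (g : nat -> nat) : Wt n (fun k : 'I_N => g k) =
  \prod_(0 <= k < N) (((g k)`! * (n + N.-1 - g k)`!)%N)%:R.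
Proof. by rewrite /Wt big_mkord. Qed.

Lemma PF' (c k M t : nat) : (k < M)%N ->
  (\prod_(M <= j < M + t) (k%:R - j%:R - c%:R : rat)) * ((c + (M.-1 - k))`!)%:R
  = (-1) ^+ t * ((c + ((M + t).-1 - k))`!)%:R.
Proof.
move=> kM; elim: t => [|t IH].
  by rewrite addn0 big_geq // mul1r expr0 mul1r.
rewrite addnS big_nat_recr /=; last by lia.
rewrite mulrAC IH.
have e : (c + ((M + t).+1.-1 - k) = (c + ((M + t).-1 - k)).+1)%N by lia.
rewrite e factS natrM exprS.
have h : (k%:R - (M + t)%:R - c%:R : rat) = - ((c + ((M + t).-1 - k)).+1)%:R.
  rewrite (_ : (c + ((M + t).-1 - k)).+1 = c + (M + t) - k)%N; last by lia.
  rewrite natrB; last by lia.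
  rewrite natrD; ring.
rewrite h; ring.
Qed.

Lemma barnes_split x M : barnesG (x + M).+1 = (barnesG x.+1 * \prod_(k < M) ((x + M).-1 - k)`!)%N.
Proof.
elim: M => [|M IH]; first by rewrite addn0 big_ord0 muln1.
rewrite /barnesG /= in IH *.
rewrite addnS big_ord_recr /= IH big_ord_recl /=.
rewrite subn0 -!mulnA; congr (_ * _)%N; rewrite mulnC; congr (_ * _)%N.
by apply: eq_bigr => k _; congr (_`!); rewrite /bump /=; lia.
Qed.

Lemma PF (c k M N : nat) : (k < M)%N -> (M <= N)%N ->
  (\prod_(M <= j < N) (k%:R - j%:R - c%:R : rat)) * ((c + (M.-1 - k))`!)%:R
  = (-1) ^+ (N - M) * ((c + (N.-1 - k))`!)%:R.
Proof. by move=> kM MN; have := PF' c (N - M) kM; rewrite subnKC. Qed.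

Lemma fact_neq0 (m : nat) : ((m`!)%:R : rat) != 0.
Proof. by rewrite pnatr_eq0 -lt0n fact_gt0. Qed.

Section Key.
Variables (g d M N : nat) (a : nat -> nat).
Hypothesis MN : (M <= N)%N.
Hypothesis a0 : forall k, (M <= k)%N -> a k = 0%N.
Hypothesis ag : forall k, (a k <= g)%N.

Definition fu k := (d + a k + (N.-1 - k))%N.
Definition fu0 k := (d + (N.-1 - k))%N.
Definition fv k := (a k + (M.-1 - k))%N.
Definition fv0 k := (M.-1 - k)%N.
Definition VN L (h : nat -> nat) : rat := \prod_(0 <= i < L) \prod_(i.+1 <= j < L) ((h j)%:R - (h i)%:R).
Definition WN n L (h : nat -> nat) : rat := \prod_(0 <= k < L) (((h k)`! * (n + L.-1 - h k)`!)%N)%:R.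
Definition GG : rat := \prod_(0 <= k < M) (((d + (N.-1 - k))`!)%:R / ((N.-1 - k)`!)%:R).
Definition PP : rat := \prod_(0 <= k < M) (((a k + (N.-1 - k))`!)%:R / ((d + a k + (N.-1 - k))`!)%:R).

Lemma VN_split (h : nat -> nat) : VN N h =
  (\prod_(0 <= i < M) \prod_(i.+1 <= j < M) ((h j)%:R - (h i)%:R)) *
  (\prod_(0 <= i < M) \prod_(M <= j < N) ((h j)%:R - (h i)%:R)) *
  (\prod_(M <= i < N) \prod_(i.+1 <= j < N) ((h j)%:R - (h i)%:R)).
Proof.
rewrite /VN (@big_cat_nat _ _ _ M) //= -big_split /=; congr (_ * _).
rewrite big_nat_cond [RHS]big_nat_cond; apply: eq_bigr => i /andP [/andP [_ iM] _].
by rewrite (@big_cat_nat _ _ _ M).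
Qed.

Lemma Key : VN N fu * WN (g + d) N fu0 * VN M fv0 * WN g M fv =
  VN N fu0 * WN (g + d) N fu * GG * WN g M fv0 * VN M fv * PP.
Proof.
rewrite !VN_split.
have eZ : \prod_(M <= i < N) \prod_(i.+1 <= j < N) ((fu j)%:R - (fu i)%:R) =
          \prod_(M <= i < N) \prod_(i.+1 <= j < N) ((fu0 j)%:R - (fu0 i)%:R) :> rat.
  apply: eq_big_nat => i /andP [Mi _]; apply: eq_big_nat => j /andP [ij _].
  by rewrite /fu /fu0 !a0 ?addn0 //; lia.
have eV : forall h1 h2 : nat -> nat, (forall i, (i < M)%N -> ((h1 i)%:R : rat) = (h2 i)%:R + (d%:R + (N.-1)%:R - (M.-1)%:R)) ->
   \prod_(0 <= i < M) \prod_(i.+1 <= j < M) ((h1 j)%:R - (h1 i)%:R) =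
   \prod_(0 <= i < M) \prod_(i.+1 <= j < M) ((h2 j)%:R - (h2 i)%:R) :> rat.
  move=> h1 h2 e; apply: eq_big_nat => i /andP [_ iM]; apply: eq_big_nat => j /andP [ij jM].
  rewrite (e j jM) (e i iM); ring.
have e1 : forall i, (i < M)%N -> ((fu i)%:R : rat) = (fv i)%:R + (d%:R + (N.-1)%:R - (M.-1)%:R).
  move=> i iM; rewrite /fu /fv !natrD !natrB; [ring|lia|lia].
have e0 : forall i, (i < M)%N -> ((fu0 i)%:R : rat) = (fv0 i)%:R + (d%:R + (N.-1)%:R - (M.-1)%:R).
  move=> i iM; rewrite /fu0 /fv0 !natrD !natrB; [ring|lia|lia].
rewrite (eV _ _ e1) (eV _ _ e0) eZ.
have eW : forall n h, WN n N h = (\prod_(0 <= k < M) (((h k)`! * (n + N.-1 - h k)`!)%N)%:R) *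
                                 \prod_(M <= k < N) (((h k)`! * (n + N.-1 - h k)`!)%N)%:R.
  by move=> n h; rewrite /WN (@big_cat_nat _ _ _ M).
rewrite !eW.
have eW2 : \prod_(M <= k < N) (((fu k)`! * (g + d + N.-1 - fu k)`!)%N)%:R =
           \prod_(M <= k < N) (((fu0 k)`! * (g + d + N.-1 - fu0 k)`!)%N)%:R :> rat.
  by apply: eq_big_nat => k /andP [Mk _]; rewrite /fu /fu0 a0 ?addn0.
rewrite eW2.
rewrite -/(VN M fv) -/(VN M fv0).
set XX := \prod_(0 <= i < M) \prod_(M <= j < N) ((fu j)%:R - (fu i)%:R).
set XX0 := \prod_(0 <= i < M) \prod_(M <= j < N) ((fu0 j)%:R - (fu0 i)%:R).
set ZZ := \prod_(M <= i < N) \prod_(i.+1 <= j < N) ((fu0 j)%:R - (fu0 i)%:R).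
set W2 := \prod_(M <= k < N) (((fu0 k)`! * (g + d + N.-1 - fu0 k)`!)%N)%:R.
set W1u := \prod_(0 <= k < M) (((fu k)`! * (g + d + N.-1 - fu k)`!)%N)%:R.
set W1u0 := \prod_(0 <= k < M) (((fu0 k)`! * (g + d + N.-1 - fu0 k)`!)%N)%:R.
suff H : XX * W1u0 * WN g M fv = XX0 * W1u * GG * WN g M fv0 * PP.
  by transitivity (VN M fv * ZZ * W2 * VN M fv0 * (XX * W1u0 * WN g M fv)); [ring | rewrite H; ring].
rewrite /XX /XX0 /W1u /W1u0 /WN /GG /PP -!big_split /=.
apply: eq_big_nat => k /andP [_ kM].
have hX : \prod_(M <= j < N) ((fu j)%:R - (fu k)%:R) = \prod_(M <= j < N) (k%:R - j%:R - (a k)%:R) :> rat.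
  apply: eq_big_nat => j /andP [Mj jN].
  rewrite /fu a0 // addn0 !natrD !natrB; [ring|lia|lia].
have hX0 : \prod_(M <= j < N) ((fu0 j)%:R - (fu0 k)%:R) = \prod_(M <= j < N) (k%:R - j%:R - (0%N)%:R) :> rat.
  apply: eq_big_nat => j /andP [Mj jN].
  rewrite /fu0 !natrD !natrB; [ring|lia|lia].
rewrite hX hX0.
have P1 := PF (a k) kM MN.
have P0 := PF 0 kM MN.
set X := \prod_(M <= j < N) (k%:R - j%:R - (a k)%:R) in P1 *.
set X0 := \prod_(M <= j < N) (k%:R - j%:R - (0%N)%:R) in P0 *.
have hX' : X = (-1) ^+ (N - M) * ((a k + (N.-1 - k))`!)%:R / ((a k + (M.-1 - k))`!)%:R.
  by rewrite -P1 mulfK ?fact_neq0.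
have hX0' : X0 = (-1) ^+ (N - M) * ((0 + (N.-1 - k))`!)%:R / ((0 + (M.-1 - k))`!)%:R.
  by rewrite -P0 mulfK ?fact_neq0.
rewrite hX' hX0' /fu /fu0 /fv /fv0 !add0n.
have n1 : (g + d + N.-1 - (d + (N.-1 - k)) = g + k)%N by lia.
have n2 : (g + M.-1 - (a k + (M.-1 - k)) = g + k - a k)%N by have := ag k; lia.
have n3 : (g + d + N.-1 - (d + a k + (N.-1 - k)) = g + k - a k)%N by have := ag k; lia.
have n4 : (g + M.-1 - (M.-1 - k) = g + k)%N by lia.
rewrite n1 n2 n3 n4 !natrM.
have := fact_neq0 (a k + (M.-1 - k)); have := fact_neq0 (M.-1 - k);
have := fact_neq0 (N.-1 - k); have := fact_neq0 (d + a k + (N.-1 - k)).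
move=> h1 h2 h3 h4; field.
by rewrite h1 h2 h3 h4.
Qed.
End Key.

Lemma WN_neq0 n L h : WN n L h != 0.
Proof.
rewrite /WN prodf_seq_neq0; apply/allP => k _ /=.
by rewrite natrM mulf_neq0 ?fact_neq0.
Qed.

Lemma VN0_neq0 M : VN M (fv0 M) != 0.
Proof.
rewrite /VN prodf_seq_neq0; apply/allP => i _ /=.
rewrite prodf_seq_neq0; apply/allP => j; rewrite mem_index_iota => /andP [ij jM] /=.
by rewrite subr_eq0 eqr_nat /fv0; apply/eqP; lia.
Qed.

Lemma det_v0 g M : \det (Bm g (fun k : 'I_M => fv0 M k)) = 1.
Proof.
rewrite det_trig.
  by rewrite big1 // => k _; rewrite mxE /Bn /fv0 leqnn subnn bin0.
apply/forallP => i; apply/forallP => j; apply/implyP => ij.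
by rewrite mxE /Bn /fv0 ifF //; apply/negbTE; have := ltn_ord j; lia.
Qed.

Lemma natr_prodn M (F : 'I_M -> nat) : ((\prod_(k < M) F k)%N%:R : rat) = \prod_(k < M) (F k)%:R.
Proof.
elim: M F => [|M IH] F; first by rewrite !big_ord0.
by rewrite !big_ord_recr /= natrM IH.
Qed.

Lemma G_eq d M N : (M <= N)%N ->
  ((barnesG (N - M).+1)%:R / (barnesG N.+1)%:R) *
  ((barnesG (d + N).+1)%:R / (barnesG (d + N - M).+1)%:R) = GG d M N :> rat.
Proof.
move=> MN.
have b1 := barnes_split (N - M) M; rewrite subnK // in b1.
have b2 := barnes_split (d + N - M) M; rewrite subnK in b2; last by lia.
rewrite b1 b2 !natrM.
have nz1 : ((barnesG (N - M).+1)%:R : rat) != 0.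
  by rewrite pnatr_eq0 -lt0n /barnesG prodn_gt0 // => i; rewrite fact_gt0.
have nz2 : ((barnesG (d + N - M).+1)%:R : rat) != 0.
  by rewrite pnatr_eq0 -lt0n /barnesG prodn_gt0 // => i; rewrite fact_gt0.
have e : GG d M N = (\prod_(k < M) ((d + N).-1 - k)`!)%:R / (\prod_(k < M) (N.-1 - k)`!)%:R.
  rewrite /GG big_mkord big_split /= prodfV !natr_prodn; congr (_ * _^-1).
  apply: eq_bigr => k _; congr (_`!)%:R; have := ltn_ord k; lia.
rewrite e; field; rewrite nz1 nz2 /=.
by rewrite pnatr_eq0 -lt0n prodn_gt0 // => i; rewrite fact_gt0.
Qed.


Lemma Wt_WN n N (g : nat -> nat) : Wt n (fun k : 'I_N => g k) = WN n N g.
Proof. by rewrite /Wt /WN big_mkord. Qed.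

Lemma Vd_VN N (g : nat -> nat) : Vd (fun k : 'I_N => g k) = VN N g.
Proof. by rewrite Vd_nat. Qed.

Lemma WN_ext n L (h1 h2 : nat -> nat) : (forall k, h1 k = h2 k) -> WN n L h1 = WN n L h2.
Proof. by move=> e; rewrite /WN; apply: eq_bigr => k _; rewrite e. Qed.

Lemma VN_ext L (h1 h2 : nat -> nat) : (forall k, h1 k = h2 k) -> VN L h1 = VN L h2.
Proof. by move=> e; rewrite /VN; apply: eq_bigr => i _; apply: eq_bigr => j _; rewrite !e. Qed.

Lemma P_eq d N (mu : seq nat) :
  \prod_(k < size mu) (((nth 0%N mu k + (N - k.+1))`!)%:R / ((d + nth 0%N mu k + (N - k.+1))`!)%:R)
  = PP d (size mu) N (nth 0%N mu) :> rat.
Proof. by rewrite /PP big_mkord; apply: eq_bigr => k _; rewrite (_ : (N - k.+1 = N.-1 - k)%N) //; lia. Qed.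


Unset Implicit Arguments.

Theorem mainTheorem7 (gamma delta : nat) (mu : seq nat) (N : nat) :
  (0 < gamma)%N -> (0 < delta)%N -> is_partition mu -> (size mu <= N)%N ->
  toeplitzD_mu N mu (phi_coef gamma delta) =
  toeplitzD N (phi_coef gamma delta)
  * ((barnesG (N - size mu).+1)%:R / (barnesG N.+1)%:R)
  * ((barnesG (delta + N).+1)%:R / (barnesG (delta + N - size mu).+1)%:R)
  * schur (conj_part mu) (fun _ : 'I_gamma => 1 : rat)
  * \prod_(k < size mu)
      (((nth 0%N mu k + (N - k.+1))`!)%:R / ((delta + nth 0%N mu k + (N - k.+1))`!)%:R).
Proof.
move=> hg hd Pm hMN.
have Sm : sorted geq mu by case/andP: Pm.
rewrite toep0 !toep_Bm schur_det //.
case: (leqP (head 0%N mu) gamma) => hh; last first.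
  have M0 : (0 < size mu)%N by move: hh; case: (mu).
  have N0 : (0 < N)%N by lia.
  have h0 : nth 0%N mu 0 = head 0%N mu by case: (mu).
  rewrite [LHS](@det_zero_col _ _ (Ordinal N0)); last first.
    move=> j; rewrite mxE /Bn /=; case: ifP => // _; rewrite bin_small //.
    by have := ltn_ord j; lia.
  rewrite [X in _ * X * _](@det_zero_col _ _ (Ordinal M0)); last first.
    move=> j; rewrite mxE /Bn /=; case: ifP => // _; rewrite bin_small //.
    by have := ltn_ord j; lia.
  by rewrite mulr0 mul0r.
have ag : forall k, (nth 0%N mu k <= gamma)%N by move=> k; apply: leq_trans (sorted_head_le Sm k) hh.
have a0 : forall k, (size mu <= k)%N -> nth 0%N mu k = 0%N by move=> k; apply: nth_default.
have E1 := @CF (gamma + delta) N (fun k : 'I_N => fu delta N (nth 0%N mu) k).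
have E2 := @CF (gamma + delta) N (fun k : 'I_N => fu delta N (fun _ => 0%N) k).
have E3 := @CF gamma (size mu) (fun k : 'I_(size mu) => fv (size mu) (nth 0%N mu) k).
have E4 := @CF gamma (size mu) (fun k : 'I_(size mu) => fv0 (size mu) k).
rewrite !Wt_WN !Vd_VN in E1 E2 E3 E4.
have {}E1 := E1 (fun k => ltac:(have := ag k; have := ltn_ord k; rewrite /fu; lia)).
have {}E2 := E2 (fun k => ltac:(have := ltn_ord k; rewrite /fu; lia)).
have {}E3 := E3 (fun k => ltac:(have := ag k; have := ltn_ord k; rewrite /fv; lia)).
have {}E4 := E4 (fun k => ltac:(have := ltn_ord k; rewrite /fv0; lia)).
rewrite det_v0 mul1r in E4.
rewrite (@WN_ext _ _ _ (fu0 delta N)) in E2; last by move=> k; rewrite /fu /fu0 addn0.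
rewrite (@VN_ext _ _ (fu0 delta N)) in E2; last by move=> k; rewrite /fu /fu0 addn0.
have K := @Key gamma delta (size mu) N (nth 0%N mu) hMN a0 ag.
have eL : \det (Bm (gamma + delta) (fun k : 'I_N => (delta + nth 0%N mu k + (N.-1 - k))%N)) =
   \det (Bm (gamma + delta) (fun k : 'I_N => fu delta N (nth 0%N mu) k)) by [].
have eD : \det (Bm (gamma + delta) (fun k : 'I_N => (delta + nth 0%N [::] k + (N.-1 - k))%N)) =
   \det (Bm (gamma + delta) (fun k : 'I_N => fu delta N (fun _ => 0%N) k)).
  by congr (\det _); apply/matrixP => j k; rewrite !mxE nth_nil.
have eS : \det (Bm gamma (fun k : 'I_(size mu) => (nth 0%N mu k + ((size mu).-1 - k))%N)) =
   \det (Bm gamma (fun k : 'I_(size mu) => fv (size mu) (nth 0%N mu) k)) by [].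
rewrite eL eD eS.
rewrite -(mulrA _ ((barnesG (N - size mu).+1)%:R / _)) G_eq // P_eq.
move/(canRL (mulfK (WN_neq0 _ _ _))): E1 => ->.
move/(canRL (mulfK (WN_neq0 _ _ _))): E2 => ->.
move/(canRL (mulfK (WN_neq0 _ _ _))): E3 => ->.
have E4' : (gamma`!)%:R ^+ size mu * \det (Cm gamma (size mu)) = WN gamma (size mu) (fv0 (size mu)) / VN (size mu) (fv0 (size mu)).
  by rewrite E4 mulfK // VN0_neq0.
rewrite E4'.
have K' : VN N (fu delta N (nth 0%N mu)) =
  VN N (fu0 delta N) * WN (gamma + delta) N (fu delta N (nth 0%N mu)) * GG delta (size mu) N *
  WN gamma (size mu) (fv0 (size mu)) * VN (size mu) (fv (size mu) (nth 0%N mu)) * PP delta (size mu) N (nth 0%N mu)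
  / (WN (gamma + delta) N (fu0 delta N) * VN (size mu) (fv0 (size mu)) * WN gamma (size mu) (fv (size mu) (nth 0%N mu))).
  rewrite -K; field.
  by rewrite !WN_neq0 VN0_neq0.
rewrite K'; field.
by rewrite !WN_neq0 VN0_neq0.
Qed.
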